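(* Let $F$ be an infinite field and let $R$ be a unital $F$-algebra (not necessarily associative) with $\dim_F R<\infty$. Let $f,g,h:R\to F$ be polynomial functions with $f=g\cdot h$ and $g(1)=h(1)=1$. Then $f$ is multiplicative if and only if both $g$ and $h$ are multiplicative.
   Context: A polynomial function $R\to F$ is one given, in coordinates with respect to an $F$-basis $a_1,\dots,a_m$ of $R$, by a polynomial in $F[x_1,\dots,x_m]$. A function $\phi:R\to F$ is multiplicative if $\phi(ab)=\phi(a)\phi(b)$ for all $a,b\in R$. *)

(* Defs.v *)
From HB Require Import structures.
From mathcomp Require Import all_boot all_order all_algebra.
From mathcomp Require Import mpoly.
Set Implicit Arguments. Unset Strict Implicit. Unset Printing Implicit Defensive.
Import Order.TTheory GRing.Theory.
Local Open Scope ring_scope.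

Definition infinite_field (F : fieldType) : Prop :=
  forall s : seq F, exists x : F, x \notin s.

Record unital_algebra (F : fieldType) (R : vectType F) (mul : R -> R -> R)
    (one : R) : Prop := {
  mulDl : forall (a : F) (x y z : R), mul (a *: x + y) z = a *: mul x z + mul y z;
  mulDr : forall (a : F) (x y z : R), mul x (a *: y + z) = a *: mul x y + mul x z;
  mul1x : forall x : R, mul one x = x;
  mulx1 : forall x : R, mul x one = x
}.

Definition polynomial_fun (F : fieldType) (R : vectType F) (f : R -> F) : Prop :=
  exists b : (\dim (fullv : {vspace R})).-tuple R,
    basis_of fullv b /\
    exists p : {mpoly F[\dim (fullv : {vspace R})]},
      forall x : R, f x = p.@[fun i => coord b i x].

Definition multiplicative (F : fieldType) (R : vectType F) (mul : R -> R -> R)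
    (f : R -> F) : Prop :=
  forall a b : R, f (mul a b) = f a * f b.

(* Main.v *)
Require Import Defs.
From HB Require Import structures.
From mathcomp Require Import all_boot all_order all_algebra.
From mathcomp Require Import ring.
From mathcomp Require Import mpoly.
From Stdlib Require Import Classical.
Set Implicit Arguments. Unset Strict Implicit. Unset Printing Implicit Defensive.
Local Open Scope ring_scope.
Module Helpers.
Import Order.TTheory GRing.Theory.
Lemma mpoly_line (F : fieldType) n (P : {mpoly F[n]}) (c d : 'I_n -> F) :
  exists p : {poly F}, forall s, P.@[fun i => s * c i + d i] = p.[s].
Proof.
exists (\sum_(m <- msupp P) (P@_m)%:P * \prod_i (c i *: 'X + (d i)%:P) ^+ m i).
move=> s; rewrite mevalE horner_sum; apply: eq_bigr => m _.
rewrite hornerM hornerC horner_prod; congr (_ * _); apply: eq_bigr => i _.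
by rewrite horner_exp !hornerE mulrC.
Qed.

Lemma line_poly (F : fieldType) (R : vectType F) (g : R -> F) :
  polynomial_fun g -> forall u v : R, exists p : {poly F}, forall s, g (s *: v + u) = p.[s].
Proof.
move=> [B [_ [P HP]]] u v.
have [p Hp] := mpoly_line P (fun i => coord B i v) (fun i => coord B i u).
exists p => s; rewrite HP -Hp; apply: meval_eq => i /=.
by rewrite linearD linearZ.
Qed.
Lemma dvd_split (F : fieldType) (d a b : {poly F}) : a != 0 -> d %| a * b ->
  exists e1 e2, [/\ e1 %| a, e2 %| b & d = e1 * e2].
Proof.
move=> a0 dab; set e := gcdp d a.
have e0 : e != 0 by rewrite gcdp_eq0 negb_and a0 orbT.
have ed : e %| d := dvdp_gcdl d a.
have ea : e %| a := dvdp_gcdr d a.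
exists e, (d %/ e); split => //; last by rewrite mulrC divpK.
have : (d %/ e) * e %| ((a %/ e) * b) * e by rewrite divpK // mulrAC divpK.
rewrite dvdp_mul2r // Gauss_dvdpr //.
by apply: coprimep_div_gcd; rewrite a0 orbT.
Qed.

Lemma fin_div (F : fieldType) (q : {poly F}) : q != 0 ->
  exists ds : seq {poly F}, forall d, d %| q -> exists2 e, e \in ds & d %= e.
Proof.
move: {-1}(size q) (leqnn (size q)) => n; elim: n q => [|n IH] q.
  by rewrite leqn0 size_poly_eq0 => ->.
move=> sq q0.
case: (classic (exists d0, [/\ d0 %| q, size d0 != 1%N & ~~ (d0 %= q)])).
  move=> [d0 [d0q s1 nq]].
  have d00 : d0 != 0 by apply: contraNneq q0 => d0E; move: d0q; rewrite d0E dvd0p.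
  set q2 := q %/ d0.
  have qE : q = q2 * d0 by rewrite divpK.
  have q20 : q2 != 0 by apply: contraNneq q0 => q2E; rewrite qE q2E mul0r.
  have sd0q : (size d0 < size q)%N.
    by rewrite ltn_neqAle dvdp_size_eqp // nq dvdp_leq.
  have sd0 : (1 < size d0)%N.
    by rewrite ltn_neqAle eq_sym s1 /= lt0n size_poly_eq0.
  have sq2 : (size q2 < size q)%N.
    rewrite qE size_mul //. 
    by move: sd0; case: (size d0) => // k; case: k => // k _; rewrite addnS /= addnS ltnS leq_addr.
  have [ds1 H1] := IH d0 (leq_trans sd0q sq) d00.
  have [ds2 H2] := IH q2 (leq_trans sq2 sq) q20.
  exists [seq x * y | x <- ds2, y <- ds1] => d dq.
  have [e1 [e2 [e1q e2q ->]]] := dvd_split q20 (etrans (esym (congr1 (dvdp d) qE)) dq).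
  have [x1 x1in Ex1] := H2 _ e1q; have [x2 x2in Ex2] := H1 _ e2q.
  exists (x1 * x2); first exact: allpairs_f.
  exact: eqp_trans (eqp_mulr _ Ex1) (eqp_mull _ Ex2).
move=> nex; exists [:: 1; q] => d dq.
have [s1|s1] := eqVneq (size d) 1%N.
  by exists 1; [rewrite inE eqxx | rewrite -size_poly_eq1 s1].
exists q; first by rewrite !inE eqxx orbT.
apply: NNPP => nd; apply: nex; exists d; split => //; exact/negP.
Qed.
Definition inf (F : fieldType) (S : F -> Prop) := forall l : seq F, exists x, S x /\ x \notin l.

Lemma inf_uniq (F : fieldType) (S : F -> Prop) n : inf S ->
  exists rs, [/\ uniq rs, size rs = n & forall x, x \in rs -> S x].
Proof.
move=> iS; elim: n => [|n [rs [u sz H]]]; first by exists [::].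
have [x [Sx xn]] := iS rs.
exists (x :: rs); split => //=; first by rewrite xn.
  by rewrite sz.
by move=> y; rewrite inE => /orP [/eqP ->|/H].
Qed.

Lemma poly_inf0 (F : fieldType) (S : F -> Prop) (p : {poly F}) : inf S ->
  (forall x, S x -> p.[x] = 0) -> p = 0.
Proof.
move=> iS H; apply/eqP; apply: NNPP => /negP p0.
have [rs [u sz Hr]] := inf_uniq (size p) iS.
have Hall : all (root p) rs by apply/allP => x /Hr /H; rewrite /root => ->.
by move: (max_poly_roots p0 Hall u); rewrite sz ltnn.
Qed.

Lemma inf_remove (F : fieldType) (S : F -> Prop) (p : {poly F}) : inf S -> p != 0 ->
  inf (fun x => S x /\ p.[x] != 0).
Proof.
move=> iS p0 l; apply: NNPP => nex.
have : p = 0; last by move/eqP: p0.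
apply: (@poly_inf0 _ (fun x => S x /\ x \notin l)).
  move=> l'; have [x [Sx]] := iS (l ++ l'); rewrite mem_cat negb_or => /andP [xl xl'].
  by exists x.
move=> x [Sx xl]; apply/eqP; apply: NNPP => px; apply: nex; exists x; split; [split => //; exact/negP | exact: xl].
Qed.

Lemma pigeon (F : fieldType) (A : eqType) (S : F -> Prop) (ds : seq A) (Rl : F -> A -> Prop) :
  inf S -> (forall x, S x -> exists2 e, e \in ds & Rl x e) ->
  exists2 e, e \in ds & inf (fun x => S x /\ Rl x e).
Proof.
elim: ds S => [|e ds IH] S iS H.
  by have [x [Sx _]] := iS [::]; have [e] := H x Sx.
case: (classic (inf (fun x => S x /\ Rl x e))) => [ie|nie].
  by exists e; rewrite ?inE ?eqxx.
have [l Hl] : exists l : seq F, forall x, S x -> Rl x e -> x \in l.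
  case: (classic (exists l : seq F, forall x, S x -> Rl x e -> x \in l)) => // nl.
  exfalso; apply: nie => l.
  case: (classic (exists x, (S x /\ Rl x e) /\ x \notin l)) => // nx.
  exfalso; apply: nl; exists l => x Sx Rx.
  case: (boolP (x \in l)) => // xl; exfalso; apply: nx; exists x; split => //.
have [e' e'in ie'] : exists2 e', e' \in ds & inf (fun x => (S x /\ x \notin l) /\ Rl x e').
  apply: IH.
    move=> l'; have [x [Sx]] := iS (l ++ l'); rewrite mem_cat negb_or => /andP [xl xl'].
    by exists x.
  move=> x [Sx xl]; have [e'' ] := H x Sx; rewrite inE => /orP [/eqP ->|e''in] R.
    by move: xl; rewrite (Hl x Sx R).
  by exists e''.
exists e'; first by rewrite inE e'in orbT.
by move=> l'; have [x [[[Sx xl] R] xl']] := ie' l'; exists x.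
Qed.

Lemma key (F : fieldType) (R : vectType F) (mul : R -> R -> R) (one : R) (f g h : R -> F) :
  infinite_field F -> unital_algebra mul one ->
  polynomial_fun g -> polynomial_fun h ->
  (forall x : R, f x = g x * h x) -> Defs.multiplicative mul f ->
  g one = 1 -> h one = 1 -> Defs.multiplicative mul g.
Proof.
move=> infF alg pg ph fgh fm g1 h1 x y.
set a := x - one; set b := y - one.
pose M s t := mul (s *: a + one) (t *: b + one).
have E1 s t : M s t = t *: mul (s *: a + one) b + (s *: a + one).
  by rewrite /M (Defs.mulDr alg) (Defs.mulx1 alg).
have E2 s t : M s t = s *: mul a (t *: b + one) + (t *: b + one).
  by rewrite /M (Defs.mulDl alg) (Defs.mul1x alg).
pose G s t := g (M s t).
have fM s t : f (M s t) = f (s *: a + one) * f (t *: b + one) by rewrite /M fm.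
have infT : inf (fun _ : F => True) by move=> l; have [z zl] := infF l; exists z.
have [pg1 Hpg1] := line_poly pg one a; have [ph1 Hph1] := line_poly ph one a.
have [qg1 Hqg1] := line_poly pg one b; have [qh1 Hqh1] := line_poly ph one b.
set p := pg1 * ph1; set q := qg1 * qh1.
have Hp s : f (s *: a + one) = p.[s] by rewrite fgh hornerM Hpg1 Hph1.
have Hq t : f (t *: b + one) = q.[t] by rewrite fgh hornerM Hqg1 Hqh1.
have f1 : f one = 1 by rewrite fgh g1 h1 mulr1.
have p0 : p != 0.
  by apply/eqP => pE; move: (Hp 0); rewrite scale0r add0r f1 pE horner0; apply/eqP; rewrite oner_eq0.
have q0 : q != 0.
  by apply/eqP => qE; move: (Hq 0); rewrite scale0r add0r f1 qE horner0; apply/eqP; rewrite oner_eq0.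
have [ds Hds] := fin_div q0.
pose C e s := exists gp : {poly F},
  [/\ forall t, G s t = gp.[t], gp != 0 & gp %= e].
have [e ein iC] : exists2 e, e \in ds & inf (fun s => (True /\ p.[s] != 0) /\ C e s).
  apply: (@pigeon _ _ (fun s => True /\ p.[s] != 0)); first exact: inf_remove.
  move=> s [_ ps].
  have [gp Hgp] := line_poly pg (s *: a + one) (mul (s *: a + one) b).
  have [hp Hhp] := line_poly ph (s *: a + one) (mul (s *: a + one) b).
  have Egh : gp * hp = p.[s] *: q.
    apply/eqP; rewrite -subr_eq0; apply/eqP; apply: (poly_inf0 infT) => t _.
    by rewrite hornerD hornerN hornerM hornerZ -Hgp -Hhp -Hp -Hq -fM -fgh E1 subrr.
  have gp0 : gp != 0.
    by apply/eqP => gE; move: Egh; rewrite gE mul0r => /esym/eqP; rewrite scale_poly_eq0 (negbTE ps) (negbTE q0).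
  have gq : gp %| q by rewrite -(dvdpZr _ _ ps) -Egh dvdp_mulr.
  have [e' e'in Ee'] := Hds _ gq.
  exists e' => //; exists gp; split => // t; by rewrite /G E1 Hgp.
have [s' [[_ [gp' [Hgp' gp'0 Ee']]] _]] := iC [::].
have [t' [[_ gt'] _]] := inf_remove infT gp'0 [::].
have W s t : G s t * G s' t' = G s t' * G s' t.
  have [k1 Hk1] := line_poly pg (t *: b + one) (mul a (t *: b + one)).
  have [k2 Hk2] := line_poly pg (t' *: b + one) (mul a (t' *: b + one)).
  pose k := k1 * (G s' t')%:P - k2 * (G s' t)%:P.
  have : k = 0.
    apply: (poly_inf0 (S := fun s => (True /\ p.[s] != 0) /\ C e s)) => // u [_ [gp [Hgp _ Ee]]].
    rewrite /k hornerD hornerN !hornerM !hornerC -Hk1 -Hk2 -!E2 -/(G u t) -/(G u t').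
    have Egg : gp %= gp' by apply: eqp_trans Ee _; rewrite eqp_sym.
    rewrite (eqpfP Egg) in Hgp.
    rewrite !Hgp !Hgp' !hornerZ; apply/eqP; rewrite subr_eq0; apply/eqP; ring.
  move/(congr1 (fun r => r.[s])); rewrite /= /k hornerD hornerN !hornerM !hornerC -Hk1 -Hk2 -!E2.
  by move/eqP; rewrite subr_eq0 => /eqP.
have Gxy : G 1 1 = g (mul x y) by rewrite /G /M !scale1r !subrK.
have Gx : G 1 0 = g x by rewrite /G /M scale1r scale0r add0r (Defs.mulx1 alg) subrK.
have Gy : G 0 1 = g y by rewrite /G /M scale1r scale0r add0r (Defs.mul1x alg) subrK.
have G00 : G 0 0 = 1 by rewrite /G /M !scale0r add0r (Defs.mulx1 alg).
have c0 : G s' t' != 0 by rewrite Hgp'.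
apply: (mulIf c0); apply: (mulIf c0).
rewrite -Gxy -Gx -Gy.
have := W 1 1; have := W 0 0; have := W 1 0; have := W 0 1.
move=> w01 w10 w00 w11.
transitivity ((G 1 1 * G s' t') * (G 0 0 * G s' t')); first by rewrite G00; ring.
rewrite w11 w00.
transitivity ((G 1 0 * G s' t') * (G 0 1 * G s' t')); last ring.
rewrite w10 w01; ring.
Qed.
End Helpers.
Import Helpers.

Theorem proposition2p4 (F : fieldType) (R : vectType F)
    (mul : R -> R -> R) (one : R) (f g h : R -> F) :
  infinite_field F ->
  unital_algebra mul one ->
  polynomial_fun f -> polynomial_fun g -> polynomial_fun h ->
  (forall x : R, f x = g x * h x) ->
  g one = 1 -> h one = 1 ->
  (multiplicative mul f <-> multiplicative mul g /\ multiplicative mul h).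
Proof.
move=> infF alg _ pg ph fgh g1 h1; split.
  move=> fm; split; first exact: (key infF alg pg ph fgh).
  by apply: (key infF alg ph pg _ fm h1 g1) => z; rewrite fgh GRing.mulrC.
move=> [gm hm] u v; rewrite !fgh gm hm; ring.
Qed.
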